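(* Let $G=(V,E)$ be a finite $k$-regular graph with $\widetilde\lambda_2=\widetilde\lambda_2(G)<\frac12$, and suppose $|V|$ is sufficiently large, i.e. $|V|\ge N$ for a threshold $N$ depending only on $\widetilde\lambda_2$. Then for every subset $\emptyset\ne S\subsetneq V$, $|E(S,\bar S)|\ge k$.
   Context: $\widetilde\lambda_2(G)$ is the second largest eigenvalue of the adjacency matrix of $G$ divided by $k$. $E(S,\bar S)$ is the set of edges with one endpoint in $S$ and the other in $V\setminus S$. *)

(* Defs.v *)
From mathcomp Require Import all_boot all_order all_algebra.
From mathcomp Require Import reals.
Set Implicit Arguments. Unset Strict Implicit. Unset Printing Implicit Defensive.
Import Order.TTheory GRing.Theory Num.Theory.
Local Open Scope ring_scope.

Definition simple_graph (n : nat) (e : rel 'I_n) : Prop :=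
  (forall x y, e x y = e y x) /\ (forall x, ~~ e x x).

Definition regular (n : nat) (e : rel 'I_n) (k : nat) : Prop :=
  forall x, #|[set y | e x y]| = k.

Definition adjmx (R : nzRingType) (n : nat) (e : rel 'I_n) : 'M[R]_n :=
  \matrix_(i, j) (e i j)%:R.

(* The eigenvalues
   with multiplicity are the roots of the characteristic polynomial, listed in
   nonincreasing order as s; the second largest is s`_1. *)
Definition normalized_lambda2 (R : realType) (n : nat) (e : rel 'I_n) (k : nat)
    (l : R) : Prop :=
  exists s : seq R,
    [/\ sorted (fun a b => b <= a) s,
        char_poly (adjmx R e) = \prod_(x <- s) ('X - x%:P)
      & l = s`_1 / k%:R].

(* E(S, S^c): edges with one endpoint in S and the other outside S;
   each such edge is counted once, oriented from S to its complement. *)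
Definition cut_size (n : nat) (e : rel 'I_n) (S : {set 'I_n}) : nat :=
  #|[set p : 'I_n * 'I_n | [&& p.1 \in S, p.2 \notin S & e p.1 p.2]]|.

(* Main.v *)
Require Import Defs.
From mathcomp Require Import all_boot all_order all_algebra.
From mathcomp Require Import reals.
From mathcomp Require Import zify ring.
From mathcomp.real_closed Require Import complex.
Import Order.TTheory GRing.Theory Num.Theory.
Local Open Scope ring_scope.

Module CombM.
Local Set Implicit Arguments. Local Unset Strict Implicit.
Local Close Scope ring_scope.
Definition Nn n (e : rel 'I_n) (T U : {set 'I_n}) : nat :=
  \sum_i \sum_j [&& i \in T, j \in U & e i j].

Lemma card_sum (T : finType) (P : pred T) : #|[set x | P x]| = \sum_x P x.
Proof.
rewrite -sum1_card big_mkcond /=; apply: eq_bigr => x _; rewrite inE.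
by case: (P x).
Qed.

Lemma cut_Nn n (e : rel 'I_n) S : cut_size e S = Nn e S (~: S).
Proof.
rewrite /cut_size card_sum /Nn pair_bigA /=; apply: eq_bigr => p _.
by rewrite inE.
Qed.

Lemma Nn_sym n (e : rel 'I_n) T U : (forall x y, e x y = e y x) ->
  Nn e T U = Nn e U T.
Proof.
move=> sym; rewrite /Nn exchange_big /=; apply: eq_bigr => i _.
apply: eq_bigr => j _; by rewrite sym; case: (i \in _); case: (j \in _).
Qed.

Lemma deg_sum n (e : rel 'I_n) k i : regular e k -> \sum_j (e i j : nat) = k.
Proof. by move=> reg; rewrite -(reg i) card_sum. Qed.

Lemma Nn_split n (e : rel 'I_n) k T U : regular e k ->
  (Nn e T U + Nn e T (~: U) = k * #|T|)%N.
Proof.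
move=> reg; rewrite /Nn -big_split /= -sum1_card big_distrr /=.
rewrite [RHS]big_mkcond /=; apply: eq_bigr => i _; rewrite -big_split /=.
case iT: (i \in T); last by rewrite !big1.
rewrite muln1 -(deg_sum i reg); apply: eq_bigr => j _.
by rewrite inE; case: (j \in U); case: (e i j).
Qed.

Lemma Nn_self n (e : rel 'I_n) T : (forall x, ~~ e x x) ->
  (Nn e T T <= #|T| * (#|T|).-1)%N.
Proof.
move=> irr; rewrite /Nn -sum1_card big_distrl /=.
rewrite [X in (_ <= X)%N]big_mkcond /=; apply: leq_sum => i _; case iT: (i \in T); last by rewrite big1.
rewrite sum1_card mul1n (cardsD1 i T) iT add1n /= -sum1_card [X in (_ <= X)%N]big_mkcond /=.
apply: leq_sum => j _; rewrite !inE.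
case: (eqVneq j i) => [->|ji]; first by rewrite (negbTE (irr i)) andbF.
by case: (j \in T); case: (e i j).
Qed.

Lemma comb n (e : rel 'I_n) k (T : {set 'I_n}) : (forall x, ~~ e x x) -> regular e k ->
  (0 < #|T| <= k)%N -> (k <= Nn e T (~: T))%N.
Proof.
move=> irr reg /andP [t0 tk].
have h1 := Nn_split T T reg; have h2 := Nn_self T irr.
move: t0 tk h1 h2; set t := #|T|; set x := Nn e T T; set y := Nn e T (~: T).
move=> t0 tk h1 h2.
case: t t0 tk h1 h2 => // t' _ tk h1 h2 /=.
have := leq_mul (leqnn t') tk.
nia.
Qed.
End CombM.
Import CombM.

Module CoreM.
Local Open Scope ring_scope.
Lemma char_poly_conj (F : fieldType) n (P D : 'M[F]_n) : P \in unitmx ->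
  char_poly (invmx P *m D *m P) = char_poly D.
Proof.
move=> Pu; rewrite /char_poly /char_poly_mx.
set Pc := map_mx polyC P; set Qc := map_mx polyC (invmx P).
have QP : Qc *m Pc = 1%:M by rewrite -map_mxM mulVmx // map_mx1.
have PQ : Pc *m Qc = 1%:M by rewrite -map_mxM mulmxV // map_mx1.
have XE : ('X%:M : 'M[{poly F}]_n) = Qc *m 'X%:M *m Pc.
  by rewrite scalar_mxC -mulmxA QP mulmx1.
rewrite [in LHS]XE !map_mxM -/Qc -/Pc -mulmxBl -mulmxBr !det_mulmx mulrC mulrA.
by rewrite -det_mulmx PQ det1 mul1r.
Qed.

Lemma psd2 (C : numClosedFieldType) (al be ga a b : C) : 0 <= al -> 0 <= ga ->
  be \is Num.real -> be ^+ 2 <= al * ga ->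
  0 <= a * a^* * al + (a * b^* + a^* * b) * be + b * b^* * ga.
Proof.
move=> al0 ga0 ber h.
have alr : al \is Num.real by apply: ger0_real.
have be2 : 0 <= be ^+ 2 by rewrite expr2 -{2}(conj_Creal ber) mul_conjC_ge0.
have [ale|alpos] := eqVneq al 0.
  rewrite ale mul0r in h *; move: h => hb; have /eqP : be ^+ 2 = 0 by apply/le_anti; rewrite hb be2.
  rewrite sqrf_eq0 => /eqP ->; rewrite !mulr0 !add0r.
  by apply: mulr_ge0 => //; exact: mul_conjC_ge0.
have alp : 0 < al by rewrite lt_def alpos al0.
rewrite -(pmulr_rge0 _ alp).
set w := a * al + b * be.
have wE : w * w^* = a * a^* * al ^+ 2 + (a * b^* + a^* * b) * al * be + b * b^* * be ^+ 2.
  rewrite /w rmorphD !rmorphM /= (conj_Creal alr) (conj_Creal ber); ring.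
have -> : al * (a * a^* * al + (a * b^* + a^* * b) * be + b * b^* * ga)
   = w * w^* + b * b^* * (al * ga - be ^+ 2) by rewrite wE; ring.
apply: addr_ge0; first exact: mul_conjC_ge0.
by apply: mulr_ge0; [exact: mul_conjC_ge0 | rewrite subr_ge0].
Qed.

Lemma cnt (T : finType) (p : pred T) : count p (enum T) = #|[pred x | p x]|.
Proof. rewrite cardE /enum_mem size_filter count_filter; apply: eq_count => x; by rewrite /= andbT inE. Qed.

Local Open Scope sesquilinear_scope.

Lemma core (C : numClosedFieldType) n (A : 'M[C]_n) (s : seq C) (mu : C)
    (u v : 'rV[C]_n) :
  A \is hermsymmx ->
  char_poly A = \prod_(x <- s) ('X - x%:P) ->
  (forall i, (0 < i)%N -> (i < size s)%N -> s`_i < mu) ->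
  (forall a b : C, a *: u + b *: v = 0 -> a = 0 /\ b = 0) ->
  (forall a b : C, 0 <= ((a *: u + b *: v) *m (A - mu%:M) *m (a *: u + b *: v)^t*) 0 0) ->
  False.
Proof.
move=> Ah Achar hs indep psd.
have /orthomx_spectralP AE := hermitian_normalmx Ah.
set P := spectralmx A in AE; set d := spectral_diag A in AE.
have Pu : P \is unitarymx := spectral_unitarymx A.
have iP : invmx P = P^t* := invmx_unitary Pu.
have PtP : P^t* *m P = 1%:M by rewrite -iP mulVmx // spectral_unit.
have Dchar : char_poly A = \prod_(x <- [seq d 0 i | i <- enum 'I_n]) ('X - x%:P).
  rewrite AE char_poly_conj ?spectral_unit // char_poly_trig ?diag_mx_is_trig //.
  rewrite big_map big_enum /=; apply: eq_bigr => i _; by rewrite mxE eqxx mulr1n.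
have pe := prod_XsubC_eq (etrans (esym Achar) Dchar).
set bad := fun x : C => ~~ (x < mu).
have cnt1 : (count bad s <= 1)%N.
  case: s hs {Achar pe} => [|x s'] hs //=.
  suff -> : count bad s' = 0%N by case: (bad x).
  apply/eqP; rewrite -leqn0 leqNgt -has_count; apply/hasPn => y /(nthP 0) [i ilt <-].
  by rewrite /bad negbK (hs i.+1).
have cardbad : (#|[pred j : 'I_n | bad (d 0%R j)]| <= 1)%N.
  by rewrite -cnt -(count_map (d 0%R) bad) -(permP pe).
have entry : forall (a b : C) j, ((a *: u + b *: v) *m P^t*) 0 j
    = a * (u *m P^t*) 0 j + b * (v *m P^t*) 0 j.
  by move=> a b j; rewrite mulmxDl -!scalemxAl !mxE.
have [a [b [abnz zbad]]] : exists a b : C, ((a != 0) || (b != 0)) /\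
    forall j, bad (d 0 j) -> ((a *: u + b *: v) *m P^t*) 0 j = 0.
  case: (pickP [pred j | bad (d 0%R j)]) => [j0 bj0 | nobad]; last first.
    exists 1, 0; split; first by rewrite oner_eq0.
    by move=> j bj; have := nobad j; rewrite /= bj.
  have onlyj0 : forall j, bad (d 0 j) -> j = j0.
    move=> j bj; have /card_le1_eqP H := cardbad.
    by apply/esym/(H j j0); rewrite inE.
  have [zu0|zunz] := eqVneq ((u *m P^t*) 0 j0) 0.
    exists 1, 0; split; first by rewrite oner_eq0.
    by move=> j /onlyj0 ->; rewrite entry zu0 !mul0r mulr0 addr0.
  exists ((v *m P^t*) 0 j0), (- (u *m P^t*) 0 j0); split.
    by rewrite oppr_eq0 zunz orbT.
  by move=> j /onlyj0 ->; rewrite entry mulNr mulrC subrr.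
set w := a *: u + b *: v in zbad.
set z := w *m P^t* in zbad.
have wnz : w != 0.
  apply/eqP => w0; have [a0 b0] := indep a b w0.
  by rewrite a0 b0 eqxx in abnz.
have zP : z *m P = w by rewrite -mulmxA PtP mulmx1.
have znz : z != 0 by apply: contraNneq wnz => z0; rewrite -zP z0 mul0mx.
have : ~~ [forall j, z 0 j == 0].
  apply: contra znz => /forallP H; apply/eqP/rowP => j.
  by apply/eqP; rewrite [X in _ == X]mxE; exact: H.
rewrite negb_forall => /existsP [j0 zj0].
have := psd a b; rewrite -/w.
have -> : A - mu%:M = P^t* *m diag_mx (d - const_mx mu) *m P.
  rewrite AE iP linearB /= diag_const_mx mulmxBr mulmxBl.
  by congr (_ - _); rewrite scalar_mxC -mulmxA PtP mulmx1.
have zt : P *m w^t* = z^t*.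
  by rewrite /z trmx_mul map_mxM trmxCK.
rewrite !mulmxA -/z -(mulmxA _ P) zt.
clearbody z.
rewrite mul_mx_diag !mxE.
under eq_bigr => j _ do rewrite !mxE.
have termE : forall j, - (z 0 j * (d 0 j - mu) * (z 0 j)^*)
    = (mu - d 0 j) * (z 0 j * (z 0 j)^*).
  by move=> j; ring.
have term0 : forall j, 0 <= (mu - d 0 j) * (z 0 j * (z 0 j)^*).
  move=> j; case bj: (bad (d 0 j)).
    by rewrite (zbad j bj) mul0r mulr0.
  apply: mulr_ge0; last exact: mul_conjC_ge0.
  by rewrite subr_ge0; apply/ltW/negbFE.
have good0 : d 0 j0 < mu.
  apply: contraNT zj0 => bj; apply/eqP; exact: zbad.
move=> H; suff : 0 < - \sum_j z 0 j * (d 0 j - mu) * (z 0 j)^*.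
  by rewrite oppr_gt0 => lt0; have := lt_le_trans lt0 H; rewrite ltxx.
rewrite -sumrN (bigD1 j0) //= termE.
apply: ltr_pwDl.
  by apply: mulr_gt0; [rewrite subr_gt0 | rewrite mul_conjC_gt0].
by apply: sumr_ge0 => j _; rewrite termE.
Qed.
End CoreM.
Import CoreM.

Module FormM.
Local Set Implicit Arguments. Local Unset Strict Implicit.
Local Open Scope ring_scope.
Local Open Scope sesquilinear_scope.
Lemma quadE (C : numClosedFieldType) n (w : 'rV[C]_n) (M : 'M[C]_n) :
  (w *m M *m w^t*) 0 0 = \sum_i \sum_j w 0 i * M i j * (w 0 j)^*.
Proof.
rewrite mxE exchange_big /=; apply: eq_bigr => j _.
rewrite !mxE mulr_suml; apply: eq_bigr => i _; by [] || idtac.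
Qed.

Lemma pt (C : numClosedFieldType) n (e : rel 'I_n) (S : {set 'I_n}) (mu a b : C) i j :
  (if i \in S then a else b) * ((e i j)%:R - mu *+ (i == j)) * (if j \in S then a else b)^* =
  a * a^* * ([&& i \in S, j \in S & e i j] : nat)%:R
  + a * b^* * ([&& i \in S, j \in ~:S & e i j] : nat)%:R
  + a^* * b * ([&& i \in ~:S, j \in S & e i j] : nat)%:R
  + b * b^* * ([&& i \in ~:S, j \in ~:S & e i j] : nat)%:R
  - mu * (a * a^* * ((i == j) && (i \in S) : nat)%:R + b * b^* * ((i == j) && (i \in ~:S) : nat)%:R).
Proof.
case: (eqVneq i j) => [<-|ij]; rewrite !inE.
  by case: (i \in S); case: (e i i) => /=; ring.
by case: (i \in S); case: (j \in S); case: (e i j) => /=; ring.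
Qed.

Lemma sum_in n (T : {set 'I_n}) : (\sum_i (i \in T : nat))%N = #|T|.
Proof. by rewrite -sum1_card [RHS]big_mkcond; apply: eq_bigr => i _; case: (i \in T). Qed.

Lemma sum_diag n (T : {set 'I_n}) : (\sum_i \sum_j ((i == j) && (i \in T) : nat))%N = #|T|.
Proof.
rewrite -sum_in; apply: eq_bigr => i _.
rewrite (bigD1 i) //= eqxx big1 ?addn0 // => j ji.
by rewrite eq_sym (negbTE ji).
Qed.

Lemma lin6 (C : comRingType) (I : finType) (F1 F2 F3 F4 F5 F6 : I -> C) (c1 c2 c3 c4 c5 c6 mu : C) :
  \sum_i (c1 * F1 i + c2 * F2 i + c3 * F3 i + c4 * F4 i - mu * (c5 * F5 i + c6 * F6 i)) =
  c1 * \sum_i F1 i + c2 * \sum_i F2 i + c3 * \sum_i F3 i + c4 * \sum_i F4 i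
   - mu * (c5 * \sum_i F5 i + c6 * \sum_i F6 i).
Proof.
rewrite !mulr_sumr -!big_split /= mulr_sumr -sumrN -big_split /=.
by apply: eq_bigr => i _; ring.
Qed.

Lemma dsumR (C : numClosedFieldType) n (F : 'I_n -> 'I_n -> nat) :
  ((\sum_i \sum_j F i j)%N)%:R = \sum_i \sum_j (F i j)%:R :> C.
Proof. rewrite natr_sum; apply: eq_bigr => i _; by rewrite natr_sum. Qed.

Lemma form_gen (C : numClosedFieldType) n (e : rel 'I_n) (S : {set 'I_n}) (mu a b : C)
   (w : 'rV[C]_n) : (forall i, w 0 i = if i \in S then a else b) ->
  (w *m (adjmx C e - mu%:M) *m w^t*) 0 0 =
   a * a^* * (Nn e S S)%:R + a * b^* * (Nn e S (~:S))%:R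
   + a^* * b * (Nn e (~:S) S)%:R + b * b^* * (Nn e (~:S) (~:S))%:R
   - mu * (a * a^* * #|S|%:R + b * b^* * #|~:S|%:R).
Proof.
move=> wE; rewrite quadE.
under eq_bigr => i _ do (under eq_bigr => j _ do rewrite !mxE !wE pt; rewrite lin6).
by rewrite lin6 -(sum_diag S) -(sum_diag (~:S)) /Nn !dsumR.
Qed.
End FormM.
Import FormM.

Lemma nat_ineq k c sS sT : (0 < k)%N -> (c < k)%N -> (k < sS)%N -> (k < sT)%N ->
  (4 * c ^ 2 <= (k * sS - 2 * c) * (k * sT - 2 * c))%N.
Proof.
move=> k0 ck hS hT.
have h1 : ((k + 1) * sT <= sS * sT)%N by apply: leq_mul; lia.
have h2 : ((k + 1) * sS <= sS * sT)%N by rewrite mulnC; apply: leq_mul; lia.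
have h3 : (4 * (k - 1) <= k * (k + 1))%N by nia.
have h4 : (2 * c * (sS + sT) <= k * (sS * sT))%N.
  have : (4 * c * (sS + sT) <= k * (k + 1) * (sS + sT))%N.
    apply: leq_mul => //; nia.
  nia.
have e1 : (k * sS - 2 * c = k * sS - 2 * c)%N by [].
nia.
Qed.

Theorem lemma3p5 (R : realType) (l : R) (hl : l < 2^-1) :
  exists N : nat, forall (n : nat) (e : rel 'I_n) (k : nat),
    simple_graph e -> regular e k -> normalized_lambda2 e k l ->
    (N <= n)%N ->
    forall S : {set 'I_n}, S != set0 -> S != setT ->
      (k <= cut_size e S)%N.
Proof.
exists 0%N => n e k [sym irr] reg [s [srt chp lE]] _ S S0 ST.
rewrite leqNgt; apply/negP; rewrite cut_Nn => ck.
set c := Nn e S (~: S) in ck.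
have k0 : (0 < k)%N by lia.
have sS0 : (0 < #|S|)%N by rewrite card_gt0.
have [y yS] : exists y, y \notin S.
  case: (pickP [pred y | y \notin S]) => [y hy|none]; first by exists y.
  by exfalso; move/negP: ST; apply; apply/eqP/setP => y; move: (none y); rewrite !inE /= => /negbFE ->.
have sT0 : (0 < #|~: S|)%N.
  rewrite card_gt0; apply/set0Pn; exists y; by rewrite inE.
case: (leqP #|S| k) => hS.
  by have := comb irr reg (introT andP (conj sS0 hS)); rewrite -/c; lia.
case: (leqP #|~: S| k) => hT.
  have := comb irr reg (introT andP (conj sT0 hT)).
  by rewrite setCK (Nn_sym _ _ sym) -/c; lia.
have kR0 : (0 : R) < k%:R by rewrite ltr0n.
have s1 : s`_1 < k%:R / 2.
  have -> : s`_1 = l * k%:R by rewrite lE mulfVK // gt_eqF.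
  by rewrite mulrC ltr_pM2l.
pose C := R[i].
pose f := real_complex R.
pose mu : C := f (k%:R / 2).
pose u : 'rV[C]_n := \row_i ((i \in S)%:R).
pose v : 'rV[C]_n := \row_i ((i \notin S)%:R).
apply: (@core C n (adjmx C e) (map f s) mu u v).
- apply/is_hermitianmxP; rewrite expr0 scale1r; apply/matrixP => i j.
  by rewrite !mxE conjC_nat sym.
- have -> : adjmx C e = map_mx f (adjmx R e).
    apply/matrixP => i j; rewrite !mxE. by rewrite /f rmorph_nat.
  by rewrite -map_char_poly chp map_prod_XsubC big_map.
- move=> i i0 isz; rewrite size_map in isz.
  rewrite (nth_map 0) // /mu ltcR.
  apply: le_lt_trans s1.
  have := sorted_leq_nth (leT := fun a b => b <= a) _ _ 0 srt.
  apply.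
  + by move=> a b d /= h1 h2; exact: le_trans h2 h1.
  + by move=> a /=.
  + by rewrite inE; exact: leq_ltn_trans i0 isz.
  + by rewrite inE.
  + done.
- move=> a b h; have [x xS] := set0Pn _ S0.
  have := congr1 (fun w : 'rV[C]_n => w 0 x) h; have := congr1 (fun w : 'rV[C]_n => w 0 y) h.
  rewrite !mxE xS (negbTE yS) /= => hb ha.
  by move: ha hb; rewrite !mulr1 !mulr0 addr0 add0r.
- move=> a b.
  rewrite (@form_gen C n e S mu a b); last first.
    by move=> i; rewrite !mxE; case: (i \in S) => /=; rewrite ?mulr1 ?mulr0 ?addr0 ?add0r.
  rewrite (Nn_sym (~: S) S sym) -/c.
  have h1 := Nn_split S S reg; have h2 := Nn_split (~: S) (~: S) reg.
  rewrite setCK (Nn_sym (~: S) S sym) -/c in h2.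
  move: h1 h2 (@nat_ineq k c _ _ k0 ck hS hT).
  set NSS := Nn e S S; set NTT := Nn e (~:S) (~:S); set sS := #|S|; set sT := #|~: S|.
  move=> h1 h2 hineq.
  have eS : NSS = (k * sS - c)%N by lia.
  have eT : NTT = (k * sT - c)%N by lia.
  have cS : (c <= k * sS)%N by lia.
  have cT : (c <= k * sT)%N by lia.
  have cS2 : (2 * c <= k * sS)%N by nia.
  have cT2 : (2 * c <= k * sT)%N by nia.
  have muE : mu = k%:R / 2 by rewrite /mu /f rmorphM /= fmorphV /= !rmorph_nat.
  have -> : a * a^* * NSS%:R + a * b^* * c%:R + a^* * b * c%:R + b * b^* * NTT%:R
      - mu * (a * a^* * sS%:R + b * b^* * sT%:R)
    = a * a^* * ((k * sS - 2 * c)%N%:R / 2) + (a * b^* + a^* * b) * c%:R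
      + b * b^* * ((k * sT - 2 * c)%N%:R / 2).
    by rewrite muE eS eT !natrB // !natrM; field.
  apply: psd2.
  - by rewrite divr_ge0 ?ler0n.
  - by rewrite divr_ge0 ?ler0n.
  - exact: realn.
  - have -> : (k * sS - 2 * c)%N%:R / 2 * ((k * sT - 2 * c)%N%:R / 2)
        = ((k * sS - 2 * c) * (k * sT - 2 * c))%N%:R / (4 : C).
      by rewrite natrM; field.
    rewrite ler_pdivlMr ?ltr0n //.
    have -> : (c%:R : C) ^+ 2 * 4 = (4 * c ^ 2)%N%:R by rewrite natrM natrX mulrC.
    by rewrite ler_nat.
Qed.
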